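(* Let $G=(V,E)$ be a graph, $\mathcal{T}$ a neighbourhood decomposition of $G$, and $\alpha$ a local linear cardinality constraint. Let $T\in\mathcal{T}$ be a type that is nonuniform with respect to $\alpha$. Then there exist a partition $\mathcal{T}'$ of $T$ and a local linear cardinality constraint $\alpha'$ such that: 1. $|\mathcal{T}'|\le 4$; 2. $\nu_{\alpha'}\big((\mathcal{T}\setminus\{T\})\cup\mathcal{T}'\big)<\nu_\alpha(\mathcal{T})$; 3. for every $X\subseteq V$, $X$ satisfies $\alpha$ if and only if $X$ satisfies $\alpha'$.
   Context: Neighbourhood decompositions: - Two vertices $u,v$ have the same neighbourhood type if $N(u)\setminus\{v\}=N(v)\setminus\{u\}$. - A neighbourhood decomposition is a partition of $V$ into classes (''types'') of pairwise same-type vertices. - Any partition refining a neighbourhood decomposition is again one. Local linear cardinality constraints: - A local linear cardinality constraint is a map $\alpha$ assigning to each $v\in V$ an interval of integers $\alpha(v)=\{l_v,\dots,u_v\}\subseteq\{0,\dots,|V|\}$, possibly empty. - A set $X\subseteq V$ satisfies $\alpha$ if $|X\cap N(v)|\in\alpha(v)$ for all $v\in V$. Uniformity: - A type $T$ is uniform with respect to $\alpha$ if $\alpha(u)=\alpha(v)$ for all $u,v\in T$, and nonuniform otherwise. - $\nu_\alpha(\mathcal{T})$ denotes the number of types of $\mathcal{T}$ that are nonuniform with respect to $\alpha$. *)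

(* Defs.v *)
From mathcomp Require Import all_boot.
Set Implicit Arguments. Unset Strict Implicit. Unset Printing Implicit Defensive.

Section Defs.
Variable V : finType.

Definition simple_graph (e : rel V) := symmetric e /\ irreflexive e.

Definition nbhd (e : rel V) (v : V) : {set V} := [set w | e v w].

Definition same_type (e : rel V) (u v : V) : bool :=
  (nbhd e u :\ v) == (nbhd e v :\ u).

Definition nbhd_decomposition (e : rel V) (P : {set {set V}}) : bool :=
  partition P [set: V] &&
  [forall S in P, forall u in S, forall v in S, same_type e u v].

(* An integer interval {l,...,u} is encoded as the pair (l,u).  To make
   equality of encodings coincide with equality of intervals as sets, the
   empty interval is encoded canonically as (1,0); nonempty ones satisfy
   l <= u <= |V|. *)
Definition empty_interval : nat * nat := (1, 0).
Definition in_interval (I : nat * nat) (k : nat) : bool := I.1 <= k <= I.2.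

Definition valid_interval (I : nat * nat) : bool :=
  (I.1 <= I.2 <= #|V|) || (I == empty_interval).

Definition llc (alpha : V -> nat * nat) : bool :=
  [forall v, valid_interval (alpha v)].

Definition satisfies (e : rel V) (alpha : V -> nat * nat) (X : {set V}) : bool :=
  [forall v, in_interval (alpha v) #|X :&: nbhd e v|].

Definition uniform (alpha : V -> nat * nat) (T : {set V}) : bool :=
  [forall u in T, forall v in T, alpha u == alpha v].

Definition nu (alpha : V -> nat * nat) (P : {set {set V}}) : nat :=
  #|[set S in P | ~~ uniform alpha S]|.

End Defs.

(* Main.v *)
Require Import Defs.
From mathcomp Require Import all_boot.
From mathcomp Require Import zify.

Lemma key_llc (V : finType) (T : {set V}) (l u d : V -> nat) wL wU :
  wL \in T -> wU \in T ->
  (forall j, j \in T -> l j <= l wL) ->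
  (forall j, j \in T -> u wU <= u j) ->
  (forall v w, v \in T -> w \in T -> d v <= (d w).+1) ->
  (forall v, v \in T -> l v <= d v <= u v) <->
  (forall v, v \in T -> (if l v == l wL then l wL else (l wL).-1) <= d v
                        <= (if u v == u wU then u wU else (u wU).+1)).
Proof.
move=> HwL HwU HL HU Hd; split=> H v vT.
- move: (H v vT) (H wL HwL) (H wU HwU) => /andP[h1 h2] /andP[h3 h4] /andP[h5 h6].
  move: (Hd wL v HwL vT) (Hd v wU vT HwU) (HL v vT) (HU v vT) => h7 h8 h9 h10.
  case: eqP => e1; case: eqP => e2; apply/andP; split; lia.
- move: (H v vT) (HL v vT) (HU v vT) => /andP[h1 h2] h3 h4.
  move: h1 h2; case: eqP => e1; case: eqP => e2 h1 h2; apply/andP; split; lia.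
Qed.

Lemma valid_le (V : finType) (I : nat * nat) : valid_interval V I -> I.2 <= #|V|.
Proof. by case/orP => [/andP[_ ->] | /eqP ->]. Qed.

Theorem mainTheorem10 (V : finType) (e : rel V) (P : {set {set V}})
  (alpha : V -> nat * nat) (T : {set V}) :
  simple_graph e ->
  nbhd_decomposition e P ->
  llc alpha ->
  T \in P ->
  ~~ uniform alpha T ->
  exists (P' : {set {set V}}) (alpha' : V -> nat * nat),
    [/\ partition P' T,
        llc alpha',
        #|P'| <= 4,
        nu alpha' ((P :\ T) :|: P') < nu alpha P
      & forall X : {set V}, satisfies e alpha X = satisfies e alpha' X].
Proof.
move=> _ /andP[/and3P[_ trivP set0P] typeP] llcA TP nunif.
have [v0 v0T] : exists v0, v0 \in T.
  apply/set0Pn; apply: contraNneq set0P => <-; exact: TP.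
have [wL wLT HL] : exists2 w, w \in T & forall j, j \in T -> (alpha j).1 <= (alpha w).1.
  case: (@arg_maxnP _ v0 (mem T) (fun i => (alpha i).1) v0T) => w wT Hw.
  by exists w.
have [wU wUT HU] : exists2 w, w \in T & forall j, j \in T -> (alpha w).2 <= (alpha j).2.
  case: (@arg_minnP _ v0 (mem T) (fun i => (alpha i).2) v0T) => w wT Hw.
  by exists w.
set L := (alpha wL).1. set U := (alpha wU).2.
pose f v := ((alpha v).1 == L, (alpha v).2 == U).
pose A (p : bool * bool) :=
  let l' := if p.1 then L else L.-1 in
  let u' := if p.2 then U else U.+1 in
  if l' <= u' then (l', u') else (1, 0).
pose alpha' v := if v \in T then A (f v) else alpha v.
have alpha'_out v : v \notin T -> alpha' v = alpha v.
  by rewrite /alpha' => /negbTE ->.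
have inA p k : in_interval (A p) k =
    ((if p.1 then L else L.-1) <= k <= (if p.2 then U else U.+1)).
  rewrite /A /=; case: leqP => h //; rewrite /in_interval /=.
  by apply/idP/idP => /andP[h1 h2]; lia.
exists (preim_partition f T), alpha'; split.
- exact: preim_partitionP.
- apply/forallP => v; rewrite /alpha'; case: ifP => vT; last exact: (forallP llcA v).
  rewrite /valid_interval /A /=; case: ifP => h /=; last by [].
  rewrite h /=.
  have hv := @valid_le _ _ (forallP llcA v).
  have hu := HU v vT.
  apply/orP; left; rewrite /U; case: eqP => e2; first by rewrite -e2.
  apply: leq_trans hv; rewrite ltn_neqAle hu andbT; apply/eqP => e3; exact: e2 (esym e3).
- pose h (p : bool * bool) := [set y in T | p == f y].
  apply: (@leq_trans #|h @: [set: bool * bool]|).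
    apply: subset_leq_card; apply/subsetP => S /imsetP [x xT ->].
    by apply/imsetP; exists (f x).
  by apply: leq_trans (leq_imset_card _ _) _; rewrite cardsT card_prod card_bool.
- rewrite /nu; apply: (@leq_trans #|[set S in P | ~~ uniform alpha S] :\ T|.+1).
    rewrite ltnS; apply: subset_leq_card; apply/subsetP => S.
    rewrite !inE => /andP[/orP[/andP[ST SP] | SP'] nuS].
      rewrite ST SP /=; apply: contra nuS => /forallP uS.
      apply/forallP => x; apply/implyP => xS; apply/forallP => y; apply/implyP => yS.
      have disj : [disjoint S & T].
        by move/trivIsetP: trivP; apply.
      have xT : x \notin T by rewrite (disjointFr disj xS).
      have yT : y \notin T by rewrite (disjointFr disj yS).
      by rewrite !alpha'_out //; move: (uS x) => /implyP/(_ xS)/forallP/(_ y)/implyP/(_ yS).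
    exfalso; move: nuS => /negP; apply.
    move: SP' => /imsetP [x xT ->].
    apply/forallP => y; apply/implyP; rewrite inE => /andP[yT /eqP fy].
    apply/forallP => z; apply/implyP; rewrite inE => /andP[zT /eqP fz].
    by rewrite /alpha' yT zT -fy -fz.
  by rewrite [X in _ <= X](cardsD1 T) !inE TP nunif /= add1n ltnSn.
- move=> X; pose d v := #|X :&: nbhd e v|.
  have Hd : forall v w, v \in T -> w \in T -> d v <= (d w).+1.
    move=> v w vT wT; case: (eqVneq v w) => [-> | vw]; first exact: leqnSn.
    have st : same_type e v w.
      by move: (forallP typeP T) => /implyP/(_ TP)/forallP/(_ v)/implyP/(_ vT)
        /forallP/(_ w)/implyP/(_ wT).
    rewrite /d (cardsD1 w) -setIDA (eqP st).
    have : #|X :&: (nbhd e w :\ v)| <= #|X :&: nbhd e w|.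
      by apply: subset_leq_card; apply: setIS; apply: subD1set.
    by move=> h; rewrite -add1n; apply: leq_add => //; apply: leq_b1.
  have K := @key_llc _ T (fun v => (alpha v).1) (fun v => (alpha v).2) d wL wU wLT wUT HL HU Hd.
  apply/forallP/forallP => H v.
  + case vT: (v \in T); last by rewrite alpha'_out ?vT //; apply: H.
    have := proj1 K (fun x _ => H x) v vT.
    by rewrite /alpha' vT inA.
  + case vT: (v \in T); last by move: (H v); rewrite alpha'_out ?vT.
    have H2 : forall x, x \in T -> (if (alpha x).1 == (alpha wL).1 then (alpha wL).1 else (alpha wL).1.-1) <= d x
                        <= (if (alpha x).2 == (alpha wU).2 then (alpha wU).2 else (alpha wU).2.+1).
      by move=> x xT; move: (H x); rewrite /alpha' xT inA.
    exact: (proj2 K H2 v vT).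
Qed.
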